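(* Let $\mu$ be the Cauchy distribution $d\mu(x)=\frac1\pi\frac{dx}{1+x^2}$, $\alpha\ge0$, $\beta>0$, $s=\alpha+\beta$. For $u_0\in\mathbb R$ let $u=f_{\alpha,\beta}(u_0)$ and $v=v_s(u_0)$. Then \[\frac{du}{du_0}=\frac{(1+v)(s^2+4\alpha v^2(1+v))-(\alpha-\beta)sv}{s(1+v)(s+2v^2(1+v))}.\]
   Context: $v_s(u)=\inf\{v>0:\int\frac{d\mu(x)}{(u-x)^2+v^2}\le\frac1s\}$; $f_{\alpha,\beta}(u_0)=\mathrm{Re}[H_{\alpha-\beta}(u_0+iv_s(u_0))]=u_0+(\alpha-\beta)\int\frac{(u_0-x)\,d\mu(x)}{(u_0-x)^2+v_s(u_0)^2}$, where $H_r(z)=z+r\int\frac{d\mu(x)}{z-x}$. *)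

(* Defs.v *)
From Stdlib Require Import Reals.
From Coquelicot Require Import Coquelicot.
Open Scope R_scope.

Definition cauchy_int (g : R -> R) : R :=
  RInt_gen (fun x => g x / (PI * (1 + x ^ 2)))
           (Rbar_locally m_infty) (Rbar_locally p_infty).

Definition v_s (s u : R) : R :=
  real (Glb_Rbar (fun v => 0 < v /\
          cauchy_int (fun x => 1 / ((u - x) ^ 2 + v ^ 2)) <= 1 / s)).

Definition f_ab (alpha beta u0 : R) : R :=
  let v := v_s (alpha + beta) u0 in
  u0 + (alpha - beta) * cauchy_int (fun x => (u0 - x) / ((u0 - x) ^ 2 + v ^ 2)).

(* Main.v *)
Require Import Defs.
From Stdlib Require Import Reals Lra.
From Coquelicot Require Import Coquelicot.
Open Scope R_scope.

Lemma cauchy_int_eval (g Phi : R -> R) Lm Lp :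
  (forall x, is_derive Phi x (g x / (PI * (1 + x ^ 2)))) ->
  (forall x, continuous (fun y => g y / (PI * (1 + y ^ 2))) x) ->
  filterlim Phi (Rbar_locally m_infty) (locally Lm) ->
  filterlim Phi (Rbar_locally p_infty) (locally Lp) ->
  cauchy_int g = Lp - Lm.
Proof.
  intros Hd Hc Hm Hp. unfold cauchy_int.
  apply is_RInt_gen_unique.
  apply is_RInt_gen_ext with (f := Derive Phi).
  - apply Filter_prod with (fun _ => True) (fun _ => True); [exists 0; auto|exists 0; auto|].
    intros a b _ _ z _. apply is_derive_unique, Hd.
  - apply is_RInt_gen_Derive; auto.
  - apply Filter_prod with (fun _ => True) (fun _ => True); [exists 0; auto|exists 0; auto|].
      intros a b _ _ z _. eexists; apply Hd.
    + apply Filter_prod with (fun _ => True) (fun _ => True); [exists 0; auto|exists 0; auto|].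
      intros a b _ _ z _. eapply continuous_ext; [|apply (Hc z)].
      intros y; symmetry; apply is_derive_unique, Hd.
Qed.

Lemma inv_lim_p : filterlim (fun x => / x) (Rbar_locally p_infty) (locally 0).
Proof.
  pose proof (is_lim_inv _ _ _ (is_lim_id p_infty) ltac:(discriminate)) as H. exact H.
Qed.

Lemma inv_lim_m : filterlim (fun x => / x) (Rbar_locally m_infty) (locally 0).
Proof.
  pose proof (is_lim_inv _ _ _ (is_lim_id m_infty) ltac:(discriminate)) as H. exact H.
Qed.

Lemma lim_pinf (Phi Psi : R -> R) M :
  (forall x, M < x -> Phi x = Psi (/ x)) -> continuous Psi 0 ->
  filterlim Phi (Rbar_locally p_infty) (locally (Psi 0)).
Proof.
  intros H Hc. apply filterlim_ext_loc with (fun x => Psi (/ x)).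
  - exists M. intros; symmetry; auto.
  - eapply filterlim_comp; [apply inv_lim_p|exact Hc].
Qed.

Lemma lim_minf (Phi Psi : R -> R) M :
  (forall x, x < M -> Phi x = Psi (/ x)) -> continuous Psi 0 ->
  filterlim Phi (Rbar_locally m_infty) (locally (Psi 0)).
Proof.
  intros H Hc. apply filterlim_ext_loc with (fun x => Psi (/ x)).
  - exists M. intros; symmetry; auto.
  - eapply filterlim_comp; [apply inv_lim_m|exact Hc].
Qed.

Lemma atan_inv_neg x : x < 0 -> atan (/ x) = - (PI / 2) - atan x.
Proof.
  intros Hx. replace (/ x) with (- / (- x)) by (field; lra).
  rewrite atan_opp, atan_inv; [|lra]. rewrite atan_opp. ring.
Qed.

Lemma pf_int (g : R -> R) u v a b c : 0 < v ->
  (forall x, g x = ((a*x+b)*((x-u)^2+v^2) + (-a*(x-u)+c*v)*(1+x^2)) / ((x-u)^2+v^2)) ->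
  cauchy_int g = b + c.
Proof.
  intros Hv Hg.
  assert (D2p : forall x, 0 < (x-u)^2+v^2) by (intros; pose proof (pow2_ge_0 (x-u)); pose proof (pow_lt v 2 Hv); lra).
  assert (D1p : forall x, 0 < 1+x^2) by (intros; pose proof (pow2_ge_0 x); lra).
  set (Psp := fun y => (a/2 * ln ((1+y^2)/((1-u*y)^2+v^2*y^2)) + b*(PI/2 - atan y)
                  + c*(PI/2 - atan (v*y/(1-u*y))))/PI).
  set (Psm := fun y => (a/2 * ln ((1+y^2)/((1-u*y)^2+v^2*y^2)) + b*(-(PI/2) - atan y)
                  + c*(-(PI/2) - atan (v*y/(1-u*y))))/PI).
  replace (b + c) with (Psp 0 - Psm 0).
  2:{ unfold Psp, Psm. field_simplify ((1 + 0 ^ 2) / ((1 - u * 0) ^ 2 + v ^ 2 * 0 ^ 2)).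
      replace (v*0/(1-u*0)) with 0 by field. rewrite atan_0. field. apply PI_neq0. }
  apply cauchy_int_eval with
    (Phi := fun x => (a/2 * ln ((1+x^2)/((x-u)^2+v^2)) + b*atan x + c*atan((x-u)/v))/PI).
  - intros x. rewrite Hg. specialize (D2p x). specialize (D1p x).
    assert (E2: (x + - u) * ((x + - u) * 1) + v * (v * 1) = (x-u)^2+v^2) by ring.
    assert (E1: 1 + x * (x * 1) = 1 + x^2) by ring.
    auto_derive.
    + rewrite E1, E2. split; [lra|split; auto].
      apply Rmult_lt_0_compat; auto. apply Rinv_0_lt_compat; auto.
    + rewrite E1, E2. pose proof PI_RGT_0.
      field. repeat split; try lra.
  - intros x. apply continuous_ext with (f := fun y => ((a*y+b)*((y-u)^2+v^2) + (-a*(y-u)+c*v)*(1+y^2)) / ((y-u)^2+v^2) / (PI * (1 + y^2))).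
    { intros y. rewrite (Hg y). reflexivity. }
    apply (@ex_derive_continuous R_AbsRing R_NormedModule). specialize (D2p x). specialize (D1p x).
    assert (E2: (x + - u) * ((x + - u) * 1) + v * (v * 1) = (x-u)^2+v^2) by ring.
    assert (E1: 1 + x * (x * 1) = 1 + x^2) by ring.
    pose proof PI_RGT_0.
    auto_derive. rewrite E1, E2. pose proof (Rmult_lt_0_compat _ _ H D1p). repeat split; lra.
  - apply lim_minf with (M := Rmin 0 u).
    + intros x Hx. pose proof (Rmin_l 0 u). pose proof (Rmin_r 0 u).
      unfold Psm.
      replace (v * / x / (1 - u * / x)) with (/ ((x - u) / v)) by (field; repeat split; lra).
      rewrite !atan_inv_neg; try lra.
      2:{ apply Rdiv_neg_pos; lra. }
      replace ((1 + (/ x) ^ 2) / ((1 - u * / x) ^ 2 + v ^ 2 * (/ x) ^ 2))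
        with ((1 + x ^ 2) / ((x - u) ^ 2 + v ^ 2)) by (field; split; [lra|specialize (D2p x); lra]).
      field. apply PI_neq0.
    + apply (@ex_derive_continuous R_AbsRing R_NormedModule). pose proof PI_RGT_0. unfold Psm. auto_derive.
      replace ((1 + - (u * 0)) * ((1 + - (u * 0)) * 1) + v * (v * 1) * (0 * (0 * 1))) with 1 by ring.
      replace (1 + 0 * (0 * 1)) with 1 by ring. replace (1 + - (u*0)) with 1 by ring.
      rewrite Rinv_1. repeat split; lra.
  - apply lim_pinf with (M := Rmax 0 u).
    + intros x Hx. pose proof (Rmax_l 0 u). pose proof (Rmax_r 0 u).
      unfold Psp.
      replace (v * / x / (1 - u * / x)) with (/ ((x - u) / v)) by (field; repeat split; lra).
      rewrite !atan_inv; try lra.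
      2:{ apply Rdiv_lt_0_compat; lra. }
      replace ((1 + (/ x) ^ 2) / ((1 - u * / x) ^ 2 + v ^ 2 * (/ x) ^ 2))
        with ((1 + x ^ 2) / ((x - u) ^ 2 + v ^ 2)) by (field; split; [lra|specialize (D2p x); lra]).
      field. apply PI_neq0.
    + apply (@ex_derive_continuous R_AbsRing R_NormedModule).
      pose proof PI_RGT_0. unfold Psp. auto_derive.
      replace ((1 + - (u * 0)) * ((1 + - (u * 0)) * 1) + v * (v * 1) * (0 * (0 * 1))) with 1 by ring.
      replace (1 + 0 * (0 * 1)) with 1 by ring. replace (1 + - (u*0)) with 1 by ring.
      rewrite Rinv_1. repeat split; lra.
Qed.


Lemma Delta_pos u v : 0 < v -> ~ (u = 0 /\ v = 1) -> 0 < (u^2+v^2-1)^2 + 4*u^2.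
Proof.
  intros Hv Hn. destruct (Req_dec u 0) as [Hu|Hu].
  - subst u. assert (v <> 1) by tauto.
    assert (v^2 - 1 <> 0).
    { intro E. assert ((v-1)*(v+1) = 0) by (rewrite <- E; ring).
      apply Rmult_integral in H0. destruct H0; lra. }
    replace ((0^2+v^2-1)^2 + 4*0^2) with ((v^2-1)*(v^2-1)) by ring.
    apply Rsqr_pos_lt in H0. unfold Rsqr in H0. lra.
  - pose proof (pow2_ge_0 (u^2+v^2-1)).
    assert (0 < u * u) by (apply Rsqr_pos_lt in Hu; exact Hu).
    simpl. lra.
Qed.

Lemma I_deg : cauchy_int (fun x => 1 / ((0 - x) ^ 2 + 1 ^ 2)) = 1 / 2.
Proof.
  pose proof PI_RGT_0.
  set (Psp := fun y => (y/(y^2+1) + (PI/2 - atan y))/(2*PI)).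
  set (Psm := fun y => (y/(y^2+1) + (-(PI/2) - atan y))/(2*PI)).
  replace (1/2) with (Psp 0 - Psm 0).
  2:{ unfold Psp, Psm. rewrite atan_0. field. lra. }
  apply cauchy_int_eval with (Phi := fun x => (x/(1+x^2) + atan x)/(2*PI)).
  - intros x. assert (0 < 1 + x^2) by (pose proof (pow2_ge_0 x); lra).
    auto_derive.
    + replace (1 + x * (x * 1)) with (1 + x^2) by ring. repeat split; lra.
    + replace (1 + x * (x * 1)) with (1 + x^2) by ring. field. split; lra.
  - intros x. assert (0 < 1 + x^2) by (pose proof (pow2_ge_0 x); lra).
    apply (@ex_derive_continuous R_AbsRing R_NormedModule). auto_derive.
    replace (0 + - x) with (-x) by ring.
    replace (- x * (- x * 1) + 1 * 1) with (1 + x^2) by ring.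
    replace (1 + x * (x * 1)) with (1 + x^2) by ring.
    assert (0 < PI * (1 + x^2)) by (apply Rmult_lt_0_compat; lra).
    repeat split; lra.
  - apply lim_minf with (M := 0).
    + intros x Hx. unfold Psm. rewrite atan_inv_neg; auto.
      field. repeat split; try lra; pose proof (pow2_ge_0 x); lra.
    + apply (@ex_derive_continuous R_AbsRing R_NormedModule). unfold Psm. auto_derive.
      replace (0 * (0 * 1) + 1) with 1 by ring. repeat split; lra.
  - apply lim_pinf with (M := 0).
    + intros x Hx. unfold Psp. rewrite atan_inv; auto.
      field. repeat split; try lra; pose proof (pow2_ge_0 x); lra.
    + apply (@ex_derive_continuous R_AbsRing R_NormedModule). unfold Psp. auto_derive.
      replace (0 * (0 * 1) + 1) with 1 by ring. repeat split; lra.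
Qed.

Lemma J_deg : cauchy_int (fun x => (0 - x) / ((0 - x) ^ 2 + 1 ^ 2)) = 0.
Proof.
  pose proof PI_RGT_0.
  set (Ps := fun y => y^2/(2*PI*(y^2+1))).
  transitivity (Ps 0 - Ps 0); [|ring].
  apply cauchy_int_eval with (Phi := fun x => 1/(2*PI*(1+x^2))).
  - intros x. assert (0 < 1 + x^2) by (pose proof (pow2_ge_0 x); lra).
    assert (0 < PI * (1 + x^2)) by (apply Rmult_lt_0_compat; lra).
    auto_derive.
    + replace (1 + x * (x * 1)) with (1 + x^2) by ring. repeat split; lra.
    + replace (1 + x * (x * 1)) with (1 + x^2) by ring. field. split; lra.
  - intros x. assert (0 < 1 + x^2) by (pose proof (pow2_ge_0 x); lra).
    apply (@ex_derive_continuous R_AbsRing R_NormedModule). auto_derive.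
    replace (0 + - x) with (-x) by ring.
    replace (- x * (- x * 1) + 1 * 1) with (1 + x^2) by ring.
    replace (1 + x * (x * 1)) with (1 + x^2) by ring.
    assert (0 < PI * (1 + x^2)) by (apply Rmult_lt_0_compat; lra).
    repeat split; lra.
  - apply lim_minf with (M := 0).
    + intros x Hx. unfold Ps.
      field. repeat split; try lra; pose proof (pow2_ge_0 x); lra.
    + apply (@ex_derive_continuous R_AbsRing R_NormedModule). unfold Ps. auto_derive.
      replace (0 * (0 * 1) + 1) with 1 by ring. repeat split; lra.
  - apply lim_pinf with (M := 0).
    + intros x Hx. unfold Ps.
      field. repeat split; try lra; pose proof (pow2_ge_0 x); lra.
    + apply (@ex_derive_continuous R_AbsRing R_NormedModule). unfold Ps. auto_derive.
      replace (0 * (0 * 1) + 1) with 1 by ring. repeat split; lra.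
Qed.

Lemma I_formula u v : 0 < v ->
  cauchy_int (fun x => 1 / ((u - x) ^ 2 + v ^ 2)) = (v + 1) / (v * (u ^ 2 + (v + 1) ^ 2)).
Proof.
  intros Hv.
  assert (Q : 0 < u ^ 2 + (v + 1) ^ 2) by (pose proof (pow2_ge_0 u); pose proof (pow_lt (v+1) 2 ltac:(lra)); lra).
  destruct (Classical_Prop.classic (u = 0 /\ v = 1)) as [[-> ->]|Hn].
  - rewrite I_deg. field.
  - pose proof (Delta_pos u v Hv Hn) as HD.
    set (D := (u^2+v^2-1)^2 + 4*u^2) in *.
    rewrite (pf_int _ u v (2*u/D) ((u^2+v^2-1)/D) ((u^2-v^2+1)/(v*D)) Hv).
    + unfold D. field. repeat split; try lra. fold D; lra.
    + intros x. assert (0 < (x-u)^2+v^2) by (pose proof (pow2_ge_0 (x-u)); pose proof (pow_lt v 2 Hv); lra).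
      replace ((u - x)^2) with ((x-u)^2) by ring.
      unfold D. field. repeat split; try lra. fold D; lra.
Qed.

Lemma J_formula u v : 0 < v ->
  cauchy_int (fun x => (u - x) / ((u - x) ^ 2 + v ^ 2)) = u / (u ^ 2 + (v + 1) ^ 2).
Proof.
  intros Hv.
  assert (Q : 0 < u ^ 2 + (v + 1) ^ 2) by (pose proof (pow2_ge_0 u); pose proof (pow_lt (v+1) 2 ltac:(lra)); lra).
  destruct (Classical_Prop.classic (u = 0 /\ v = 1)) as [[-> ->]|Hn].
  - rewrite J_deg. field.
  - pose proof (Delta_pos u v Hv Hn) as HD.
    set (D := (u^2+v^2-1)^2 + 4*u^2) in *.
    rewrite (pf_int _ u v ((u^2-v^2+1)/D) (u*(u^2+v^2+1)/D) (-2*u*v/D) Hv).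
    + unfold D. field. repeat split; try lra. fold D; lra.
    + intros x. assert (0 < (x-u)^2+v^2) by (pose proof (pow2_ge_0 (x-u)); pose proof (pow_lt v 2 Hv); lra).
      replace ((u - x)^2) with ((x-u)^2) by ring.
      unfold D. field. repeat split; try lra. fold D; lra.
Qed.

Lemma div_le_inv A B s : 0 < B -> 0 < s -> A / B <= 1 / s -> A * s <= B.
Proof.
  intros HB Hs H. apply Rmult_le_compat_r with (r := B * s) in H; [|nra].
  replace (A / B * (B * s)) with (A * s) in H by (field; lra).
  replace (1 / s * (B * s)) with B in H by (field; lra). exact H.
Qed.

Lemma vs_spec s u : 0 < s ->
  0 < v_s s u /\ v_s s u * (u ^ 2 + (v_s s u + 1) ^ 2) = s * (v_s s u + 1).
Proof.
  intros Hs.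
  set (P := fun v => v * u ^ 2 + v * (v + 1) ^ 2 - s * (v + 1)).
  assert (HP : continuity P).
  { intros x. apply continuity_pt_filterlim.
    apply (@ex_derive_continuous R_AbsRing R_NormedModule). unfold P. auto_derive. auto. }
  assert (H0 : P 0 < 0) by (unfold P; simpl; lra).
  assert (H1 : 0 < P (s + 1)).
  { unfold P. pose proof (pow2_ge_0 u). simpl. nra. }
  destruct (IVT P 0 (s + 1) HP ltac:(lra) H0 H1) as [z [[Hz0 Hz1] Pz]].
  assert (zpos : 0 < z).
  { destruct Hz0 as [|E]; auto. subst z. lra. }
  assert (Hrel : z * (u ^ 2 + (z + 1) ^ 2) = s * (z + 1)) by (unfold P in Pz; lra).
  assert (Hvs : v_s s u = z).
  { unfold v_s. rewrite (is_glb_Rbar_unique _ (Finite z)); [reflexivity|].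
    split.
    - intros v [Hv Hle]. simpl. rewrite I_formula in Hle; auto.
      assert (K : 0 < v * (u ^ 2 + (v + 1) ^ 2)).
      { apply Rmult_lt_0_compat; auto. pose proof (pow2_ge_0 u).
        pose proof (pow_lt (v+1) 2 ltac:(lra)); lra. }
      apply div_le_inv in Hle; auto.
      destruct (Rle_lt_dec z v) as [|Hlt]; auto. exfalso.
      assert (Id : z * P v = (v - z) * (v * z * (v + z + 2) + s) + v * P z)
        by (unfold P; ring).
      rewrite Pz in Id.
      assert (z * P v < 0).
      { rewrite Id. assert (0 < v * z * (v + z + 2) + s).
        { assert (0 < v * z) by nra. nra. }
        nra. }
      assert (P v < 0) by nra.
      unfold P in H2. lra.
    - intros b Hb. apply Hb. split; auto. rewrite I_formula; auto.
      right. rewrite Hrel. field. lra. }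
  rewrite Hvs. auto.
Qed.

Lemma deriv_quot (f q : R -> R) x :
  (forall y, f y - f x = (y - x) * q y) -> continuous q x -> is_derive f x (q x).
Proof.
  intros Hf Hc. apply is_derive_Reals.
  apply continuity_pt_filterlim in Hc.
  intros eps Heps. destruct (Hc eps Heps) as [alp [Halp H]].
  exists (mkposreal alp Halp). intros h Hh0 Hh. simpl in Hh.
  replace ((f (x + h) - f x) / h) with (q (x + h)).
  2:{ rewrite Hf. field. auto. }
  apply (H (x + h)). split.
  - split; [exact I|]. lra.
  - simpl. unfold R_dist. replace (x + h - x) with h by ring. auto.
Qed.

Lemma w_diff s u0 y : 0 < s ->
  v_s s y - v_s s u0 = (y - u0) * (-(y + u0) / (v_s s y + v_s s u0 + 2 + s / (v_s s y * v_s s u0))).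
Proof.
  intros Hs. destruct (vs_spec s y Hs) as [Ha Ea]. destruct (vs_spec s u0 Hs) as [Hb Eb].
  set (a := v_s s y) in *. set (b := v_s s u0) in *.
  assert (key : (a - b) * (a * b * (a + b + 2) + s) = - (y ^ 2 - u0 ^ 2) * a * b).
  { assert (Z : (a - b) * (a * b * (a + b + 2) + s) - (- (y ^ 2 - u0 ^ 2) * a * b)
              = (b * (a * (y ^ 2 + (a + 1) ^ 2) - s * (a + 1)) - a * (b * (u0 ^ 2 + (b + 1) ^ 2) - s * (b + 1))))
      by ring.
    rewrite Ea, Eb in Z. lra. }
  assert (Hk : 0 < a * b * (a + b + 2) + s).
  { assert (0 < a * b) by nra. nra. }
  apply (Rmult_eq_reg_r (a * b * (a + b + 2) + s)); [|lra].
  rewrite key. field. repeat split; try lra.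
Qed.

Lemma w_cont s u0 : 0 < s -> continuous (v_s s) u0.
Proof.
  intros Hs. apply continuity_pt_filterlim. intros eps Heps.
  pose proof (Rabs_pos u0) as Hu.
  assert (He : 0 < eps / (Rabs u0 + 1)) by (apply Rdiv_lt_0_compat; lra).
  exists (Rmin 1 (eps / (Rabs u0 + 1))). split.
  { apply Rmin_glb_lt; lra. }
  intros y [[_ Hne] Hd]. simpl in Hd. unfold R_dist in Hd. simpl. unfold R_dist.
  pose proof (Rmin_l 1 (eps / (Rabs u0 + 1))). pose proof (Rmin_r 1 (eps / (Rabs u0 + 1))).
  rewrite w_diff; auto.
  destruct (vs_spec s y Hs) as [Ha _]. destruct (vs_spec s u0 Hs) as [Hb _].
  set (a := v_s s y) in *. set (b := v_s s u0) in *.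
  assert (HQ : 2 <= a + b + 2 + s / (a * b)).
  { assert (0 < s / (a * b)) by (apply Rdiv_lt_0_compat; nra). lra. }
  set (Q := a + b + 2 + s / (a * b)) in *.
  rewrite Rabs_mult.
  replace (- (y + u0) / Q) with ((- (y + u0)) * / Q) by reflexivity.
  rewrite Rabs_mult, Rabs_Ropp, (Rabs_inv Q), (Rabs_pos_eq Q) by lra.
  assert (Ht : Rabs (y + u0) <= Rabs (y - u0) + 2 * Rabs u0).
  { replace (y + u0) with ((y - u0) + 2 * u0) by ring.
    eapply Rle_trans; [apply Rabs_triang|]. rewrite Rabs_mult, (Rabs_pos_eq 2) by lra. lra. }
  pose proof (Rabs_pos (y + u0)). pose proof (Rabs_pos (y - u0)).
  assert (Hq : 0 < / Q <= / 2).
  { split. apply Rinv_0_lt_compat; lra. apply Rinv_le_contravar; lra. }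
  assert (T1 : Rabs (y + u0) * / Q <= Rabs u0 + 1).
  { assert (Rabs (y + u0) * / Q <= Rabs (y + u0) * / 2) by (apply Rmult_le_compat_l; lra).
    lra. }
  assert (T2 : Rabs (y - u0) * (Rabs (y + u0) * / Q) <= Rabs (y - u0) * (Rabs u0 + 1))
    by (apply Rmult_le_compat_l; lra).
  assert (T3 : Rabs (y - u0) * (Rabs u0 + 1) < eps / (Rabs u0 + 1) * (Rabs u0 + 1))
    by (apply Rmult_lt_compat_r; lra).
  replace (eps / (Rabs u0 + 1) * (Rabs u0 + 1)) with eps in T3 by (field; lra).
  lra.
Qed.

Lemma w_deriv s u0 : 0 < s ->
  is_derive (v_s s) u0
    (-(u0 + u0) / (v_s s u0 + v_s s u0 + 2 + s / (v_s s u0 * v_s s u0))).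
Proof.
  intros Hs.
  apply (deriv_quot (v_s s) (fun y => -(y + u0) / (v_s s y + v_s s u0 + 2 + s / (v_s s y * v_s s u0)))).
  - intros y. apply w_diff; auto.
  - destruct (vs_spec s u0 Hs) as [Hb _].
    apply continuous_ext with
      (f := fun y => mult (-(y + u0)) ((fun t => / (t + v_s s u0 + 2 + s / (t * v_s s u0))) (v_s s y))).
    { intros y. reflexivity. }
    apply (@continuous_mult R_UniformSpace R_AbsRing (fun y => -(y + u0)) (fun y => (fun t => / (t + v_s s u0 + 2 + s / (t * v_s s u0))) (v_s s y))).
    + apply (@ex_derive_continuous R_AbsRing R_NormedModule). auto_derive. auto.
    + apply (continuous_comp (v_s s) (fun t => / (t + v_s s u0 + 2 + s / (t * v_s s u0)))). apply w_cont; auto.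
      apply (@ex_derive_continuous R_AbsRing R_NormedModule). auto_derive.
      assert (0 < s / (v_s s u0 * v_s s u0)) by (apply Rdiv_lt_0_compat; nra).
      unfold Rdiv in H. split; [nra|lra].
Qed.


Lemma F_deriv (w : R -> R) k u0 w' : is_derive w u0 w' -> 0 < w u0 ->
  is_derive (fun u => u + k * (u * (w u / (w u + 1)))) u0
    (1 + k * (w u0 / (w u0 + 1) + u0 * (w' / (w u0 + 1) ^ 2))).
Proof.
  intros Hd Hp.
  assert (Dw : Derive (fun x => w x) u0 = w') by (apply is_derive_unique; exact Hd).
  auto_derive.
  - split; [eexists; exact Hd|]. split; [eexists; exact Hd|]. split; [lra|exact I].
  - rewrite Dw. field. lra.
Qed.

Lemma final_alg (alpha beta u0 w : R) : 0 < alpha + beta -> 0 < w ->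
  ((1 + w) * ((alpha + beta) ^ 2 + 4 * alpha * w ^ 2 * (1 + w)) - (alpha - beta) * (alpha + beta) * w) /
  ((alpha + beta) * (1 + w) * ((alpha + beta) + 2 * w ^ 2 * (1 + w))) -
  2 * ((alpha - beta) / (alpha + beta)) * w / ((w + 1) ^ 2 * ((alpha + beta) + 2 * w ^ 2 * (w + 1))) *
  (w * (u0 ^ 2 + (w + 1) ^ 2) - (alpha + beta) * (w + 1)) =
  1 +
  (alpha - beta) / (alpha + beta) *
  (w / (w + 1) + u0 * (- (u0 + u0) / (w + w + 2 + (alpha + beta) / (w * w)) / (w + 1) ^ 2)).
Proof.
  intros Hs Hw.
  assert (0 < (alpha + beta) + 2 * w ^ 2 * (w + 1)) by (pose proof (pow_lt w 2 Hw); nra).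
  assert (0 < w + w + 2 + (alpha + beta) / (w * w)) by (assert (0 < (alpha + beta) / (w * w)) by (apply Rdiv_lt_0_compat; nra); lra).
  field. repeat split; try lra.
Qed.

Theorem lemma6p7 (alpha beta u0 : R) :
  0 <= alpha -> 0 < beta ->
  let s := alpha + beta in
  let v := v_s s u0 in
  is_derive (f_ab alpha beta) u0
    (((1 + v) * (s ^ 2 + 4 * alpha * v ^ 2 * (1 + v)) - (alpha - beta) * s * v)
     / (s * (1 + v) * (s + 2 * v ^ 2 * (1 + v)))).
Proof.
  intros Ha Hb. cbv zeta.
  assert (Hs : 0 < alpha + beta) by lra.
  set (S := alpha + beta) in *.
  apply is_derive_ext with (f := fun u => u + ((alpha - beta) / S) * (u * (v_s S u / (v_s S u + 1)))).
  { intros t. unfold f_ab. cbv zeta. fold S.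
    destruct (vs_spec S t Hs) as [Hp Hr].
    rewrite J_formula; auto.
    assert (E : t ^ 2 + (v_s S t + 1) ^ 2 = S * (v_s S t + 1) / v_s S t).
    { apply (Rmult_eq_reg_l (v_s S t)); [|lra]. rewrite Hr. field. lra. }
    rewrite E. match goal with |- ?l = ?r => change (@eq R l r) end. field. repeat split; lra. }
  destruct (vs_spec S u0 Hs) as [Hp Hr].
  pose proof (F_deriv (v_s S) ((alpha - beta) / S) u0 _ (w_deriv S u0 Hs) Hp) as HF.
  set (w := v_s S u0) in *.
  set (k := (alpha - beta) / S) in *.
  set (D := S + 2 * w ^ 2 * (w + 1)).
  assert (HD : 0 < D) by (unfold D; pose proof (pow_lt w 2 Hp); nra).
  set (Ex := w * (u0 ^ 2 + (w + 1) ^ 2) - S * (w + 1)).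
  assert (Ex0 : Ex = 0) by (unfold Ex; lra).
  match type of HF with is_derive _ _ ?L => replace L with
    ((((1 + w) * (S ^ 2 + 4 * alpha * w ^ 2 * (1 + w)) - (alpha - beta) * S * w)
     / (S * (1 + w) * (S + 2 * w ^ 2 * (1 + w)))) - 2 * k * w / ((w + 1) ^ 2 * D) * Ex) in HF end.
  - rewrite Ex0, Rmult_0_r, Rminus_0_r in HF. exact HF.
  - unfold k, Ex, D. apply final_alg; auto.
Qed.
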